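(* For all integers $m\ge1$, $r\ge0$ and $n\ge1$, $$\mathcal D_{m,r}(n,x)=(-1)^n\det M_n,$$ where $M_n$ is the $(n+1)\times(n+1)$ matrix with rows and columns indexed by $0,\dots,n$, whose row $0$ is $(1,x,x^2,\dots,x^n)$ and whose row $i$ for $1\le i\le n$ is $\big(w_{m,r}(0,i-1),w_{m,r}(1,i-1),\dots,w_{m,r}(n,i-1)\big)$; explicitly $$M_n=\begin{pmatrix}1&x&\cdots&x^{n-1}&x^n\\ 1&w_{m,r}(1,0)&\cdots&w_{m,r}(n-1,0)&w_{m,r}(n,0)\\ 0&1&\cdots&w_{m,r}(n-1,1)&w_{m,r}(n,1)\\ \vdots&&\ddots&&\vdots\\ 0&0&\cdots&1&w_{m,r}(n,n-1)\end{pmatrix}.$$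
   Context: For integers $m\ge1$, $n,k,r\ge0$: the $r$-Whitney numbers of the first kind $w_{m,r}(n,k)$ are defined by $\sum_{n\ge k}w_{m,r}(n,k)\frac{z^n}{n!}=(1+mz)^{-r/m}\frac{\ln^k(1+mz)}{m^kk!}$ (so $w_{m,r}(n,n)=1$ and $w_{m,r}(n,k)=0$ for $k>n$); the $r$-Whitney numbers of the second kind $W_{m,r}(n,k)$ by $\sum_{n\ge k}W_{m,r}(n,k)\frac{z^n}{n!}=\frac{e^{rz}}{k!}\left(\frac{e^{mz}-1}{m}\right)^k$; and the $r$-Dowling polynomial is $\mathcal D_{m,r}(n,u):=\sum_{k=0}^nW_{m,r}(n,k)u^k$. *)

(* Defs.v *)
From HB Require Import structures.
From mathcomp Require Import all_boot all_order all_algebra.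
Set Implicit Arguments. Unset Strict Implicit. Unset Printing Implicit Defensive.
Import Order.TTheory GRing.Theory Num.Theory.
Local Open Scope ring_scope.

(* Exponential generating functions are handled through truncated power
   series, represented as polynomials over rat: the coefficient of z^n of a
   product of power series only depends on the terms of degree <= n. *)

Definition gbin (a : rat) (j : nat) : rat :=
  (\prod_(i < j) (a - i%:R)) / (j`!)%:R.

Definition pow1p_ser (m : nat) (a : rat) (N : nat) : {poly rat} :=
  \sum_(j < N.+1) (gbin a j * (m%:R) ^+ j) *: 'X^j.

Definition ln1p_ser (m : nat) (N : nat) : {poly rat} :=
  \sum_(1 <= j < N.+1) ((-1) ^+ j.+1 * (m%:R) ^+ j / j%:R) *: 'X^j.

Definition exp_ser (c : rat) (N : nat) : {poly rat} :=
  \sum_(j < N.+1) (c ^+ j / (j`!)%:R) *: 'X^j.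

(* r-Whitney numbers of the first kind:
   sum_n w(n,k) z^n/n! = (1+mz)^(-r/m) ln^k(1+mz) / (m^k k!) *)
Definition whit1 (m r n k : nat) : rat :=
  (n`!)%:R * ((pow1p_ser m (- (r%:R / m%:R)) n * (ln1p_ser m n) ^+ k)`_n
              / ((m%:R) ^+ k * (k`!)%:R)).

(* r-Whitney numbers of the second kind:
   sum_n W(n,k) z^n/n! = e^(rz)/k! ((e^(mz)-1)/m)^k *)
Definition whit2 (m r n k : nat) : rat :=
  (n`!)%:R * ((exp_ser r%:R n * (exp_ser m%:R n - 1) ^+ k)`_n
              / ((m%:R) ^+ k * (k`!)%:R)).

Definition dowling (m r n : nat) : {poly rat} :=
  \sum_(k < n.+1) (whit2 m r n k) *: 'X^k.

Definition Mmat (m r n : nat) : 'M[{poly rat}]_(n.+1) :=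
  \matrix_(i < n.+1, j < n.+1)
    (if i == 0 :> nat then 'X^j else (whit1 m r j i.-1)%:P).

(* Main.v *)
Require Import Defs.
From HB Require Import structures.
From mathcomp Require Import all_boot all_order all_algebra.
From mathcomp Require Import ring.
Import GRing.Theory Num.Theory.
Local Open Scope ring_scope.

Definition eqN (N : nat) (p q : {poly rat}) := forall i, (i <= N)%N -> p`_i = q`_i.

Lemma eqN_refl N p : eqN N p p. Proof. by []. Qed.
Lemma eqN_sym N p q : eqN N p q -> eqN N q p. Proof. by move=> H i Hi; rewrite H. Qed.
Lemma eqN_trans N p q s : eqN N p q -> eqN N q s -> eqN N p s.
Proof. by move=> H1 H2 i Hi; rewrite H1 ?H2. Qed.
Lemma eqN_add N p p' q q' : eqN N p p' -> eqN N q q' -> eqN N (p + q) (p' + q').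
Proof. by move=> H1 H2 i Hi; rewrite !coefD H1 ?H2. Qed.
Lemma eqN_mul N p p' q q' : eqN N p p' -> eqN N q q' -> eqN N (p * q) (p' * q').
Proof.
move=> H1 H2 i Hi; rewrite !coefM; apply: eq_bigr => j _.
have Hj : (j <= N)%N by apply: leq_trans Hi; rewrite -ltnS.
have Hij : (i - j <= N)%N by apply: leq_trans Hi; apply: leq_subr.
by rewrite H1 // H2.
Qed.
Lemma eqN_exp N p q k : eqN N p q -> eqN N (p ^+ k) (q ^+ k).
Proof. move=> H; elim: k => [|k IH]; first by rewrite !expr0. by rewrite !exprS; apply: eqN_mul. Qed.
Lemma eqN_deriv N p q : eqN N.+1 p q -> eqN N p^`() q^`().
Proof. by move=> H i Hi; rewrite !coef_deriv H. Qed.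
Lemma eqN_le N M p q : (M <= N)%N -> eqN N p q -> eqN M p q.
Proof. by move=> HM H i Hi; apply: H; apply: leq_trans HM. Qed.

Lemma coef_pow1p m a N i : (pow1p_ser m a N)`_i =
  if (i <= N)%N then gbin a i * (m%:R) ^+ i else 0.
Proof. by rewrite /pow1p_ser -(poly_def _ (fun j => gbin a j * (m%:R) ^+ j)) coef_poly ltnS. Qed.

Lemma coef_exp c N i : (exp_ser c N)`_i =
  if (i <= N)%N then c ^+ i / (i`!)%:R else 0.
Proof. by rewrite /exp_ser -(poly_def _ (fun j => c ^+ j / (j`!)%:R)) coef_poly ltnS. Qed.

Lemma coef_ln1p m N i : (ln1p_ser m N)`_i =
  if (i <= N)%N then (-1) ^+ i.+1 * (m%:R) ^+ i / i%:R else 0.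
Proof.
have -> : ln1p_ser m N = \sum_(j < N.+1) ((-1) ^+ j.+1 * (m%:R) ^+ j / j%:R) *: 'X^j.
  rewrite /ln1p_ser -(big_mkord xpredT (fun j => ((-1) ^+ j.+1 * (m%:R) ^+ j / j%:R) *: 'X^j)).
  by rewrite big_ltn // invr0 mulr0 scale0r add0r.
by rewrite -(poly_def _ (fun j => (-1) ^+ j.+1 * (m%:R) ^+ j / j%:R)) coef_poly ltnS.
Qed.

Lemma gbinS a j : gbin a j.+1 * (j.+1)%:R = (a - j%:R) * gbin a j.
Proof.
rewrite /gbin big_ord_recr /= factS natrM.
have h1 : (j`!)%:R != 0 :> rat by rewrite pnatr_eq0 -lt0n fact_gt0.
have h2 : (j.+1)%:R != 0 :> rat by rewrite pnatr_eq0.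
field. by rewrite h1 nat1r.
Qed.

Lemma gbin0 a : gbin a 0 = 1.
Proof. by rewrite /gbin big_ord0 fact0 divr1. Qed.

Definition uu (m : nat) : {poly rat} := 1 + (m%:R)%:P * 'X.

Lemma coef_uD m p i : (uu m * p^`())`_i = p`_i.+1 *+ i.+1 + m%:R * (p`_i *+ i).
Proof.
rewrite /uu mulrDl mul1r coefD -mulrA coefCM coefXM coef_deriv.
by case: i => [|i] /=; rewrite ?coef_deriv // mulr0n mulr0.
Qed.

Lemma fact_neq0 k : (k`!)%:R != 0 :> rat.
Proof. by rewrite pnatr_eq0 -lt0n fact_gt0. Qed.

Lemma eqA m a n : eqN n (uu m * (pow1p_ser m a n.+1)^`()) ((a * m%:R)%:P * pow1p_ser m a n.+1).
Proof.
move=> i Hi; rewrite coef_uD coefCM !coef_pow1p ltnS Hi (leq_trans Hi) //.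
have -> : (gbin a i.+1 * m%:R ^+ i.+1) *+ i.+1 = (gbin a i.+1 * (i.+1)%:R) * m%:R ^+ i.+1 by ring.
rewrite gbinS exprS; ring.
Qed.

Lemma eqB m n : eqN n (uu m * (ln1p_ser m n.+1)^`()) (m%:R)%:P.
Proof.
move=> i Hi; rewrite coef_uD coefC !coef_ln1p ltnS Hi (leq_trans Hi) //.
have h2 : (i.+1)%:R != 0 :> rat by rewrite pnatr_eq0.
case: i Hi h2 => [|i] Hi h2 /=.
  by rewrite mulr0n mulr0 addr0 mulr1n expr1 divr1 expr2 mulrN1 opprK mul1r.
have h3 : (i.+1)%:R != 0 :> rat by rewrite pnatr_eq0.
rewrite !exprS; field. by rewrite nat1r h3 -(natrD _ 2 i) h2.
Qed.

Lemma eqC c n : eqN n (exp_ser c n.+1)^`() (c%:P * exp_ser c n.+1).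
Proof.
move=> i Hi; rewrite coef_deriv coefCM !coef_exp ltnS Hi (leq_trans Hi) //.
rewrite factS natrM exprS.
have h1 := fact_neq0 i.
have h2 : (i.+1)%:R != 0 :> rat by rewrite pnatr_eq0.
field. by rewrite h1 nat1r.
Qed.

Lemma eqN_muln N p q k : eqN N p q -> eqN N (p *+ k) (q *+ k).
Proof. by move=> H i Hi; rewrite !coefMn H. Qed.

Lemma eqN_exp_ser c n : eqN n (exp_ser c n) (exp_ser c n.+1).
Proof. by move=> i Hi; rewrite !coef_exp Hi (leq_trans Hi). Qed.

Lemma eqN_pow1p m a n : eqN n (pow1p_ser m a n) (pow1p_ser m a n.+1).
Proof. by move=> i Hi; rewrite !coef_pow1p Hi (leq_trans Hi). Qed.

Lemma eqN_ln1p m n : eqN n (ln1p_ser m n) (ln1p_ser m n.+1).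
Proof. by move=> i Hi; rewrite !coef_ln1p Hi (leq_trans Hi). Qed.

Lemma eqN_eq N p q : p = q -> eqN N p q. Proof. by move=> ->. Qed.

Definition Gs (m r n k : nat) : {poly rat} := exp_ser r%:R n.+1 * (exp_ser m%:R n.+1 - 1) ^+ k.

Lemma G_derivS m r n k : eqN n (Gs m r n k.+1)^`()
  ((r%:R)%:P * Gs m r n k.+1 + (k.+1)%:R * (m%:R)%:P * Gs m r n k.+1 + (k.+1)%:R * (m%:R)%:P * Gs m r n k).
Proof.
rewrite /Gs derivM deriv_exp derivB derivC subr0 /=.
apply: eqN_trans.
  apply: eqN_add; first by apply: eqN_mul; [apply: eqC | apply: eqN_refl].
  by apply: eqN_mul; [apply: eqN_refl | apply: eqN_muln; apply: eqN_mul; [apply: eqC|apply: eqN_refl]].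
apply: eqN_eq.
move: (exp_ser m%:R n.+1) => e. move: (exp_ser r%:R n.+1) => f.
have -> : e = (e - 1) + 1 by rewrite subrK.
rewrite addrK. move: (e - 1) => g. rewrite exprS. ring.
Qed.

Lemma G_deriv0 m r n : eqN n (Gs m r n 0)^`() ((r%:R)%:P * Gs m r n 0).
Proof. rewrite /Gs !expr0 !mulr1; exact: eqC. Qed.

Lemma whit2_G m r n k : whit2 m r n k = n`!%:R * ((Gs m r n k)`_n / (m%:R ^+ k * k`!%:R)).
Proof.
rewrite /whit2 /Gs; congr (_ * (_ / _)).
apply: (fun H1 H2 => @eqN_mul n _ _ _ _ H1 H2 n (leqnn n)); [apply: eqN_exp_ser| apply: eqN_exp; apply: eqN_add; [apply: eqN_exp_ser|apply: eqN_refl]].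
Qed.

Lemma whit2_GS m r n k : whit2 m r n.+1 k = n.+1`!%:R * ((Gs m r n k)`_n.+1 / (m%:R ^+ k * k`!%:R)).
Proof. by []. Qed.

Lemma whit2S m r n k : m != 0%N ->
  whit2 m r n.+1 k.+1 = (r%:R + (k.+1)%:R * m%:R) * whit2 m r n k.+1 + whit2 m r n k.
Proof.
move=> Hm.
have H := G_derivS m r n k n (leqnn n).
rewrite coef_deriv !coefD -!mulrA !mulr_natl !coefMn !coefCM in H.
rewrite whit2_GS !whit2_G factS natrM.
have hm : m%:R != 0 :> rat by rewrite pnatr_eq0.
have h1 := fact_neq0 k. have h2 := fact_neq0 n.
have h3 : (k.+1)%:R != 0 :> rat by rewrite pnatr_eq0.
have h4 : (n.+1)%:R != 0 :> rat by rewrite pnatr_eq0.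
have Ha : (Gs m r n k.+1)`_n.+1 = (r%:R * (Gs m r n k.+1)`_n + m%:R * (Gs m r n k.+1)`_n *+ k.+1 + m%:R * (Gs m r n k)`_n *+ k.+1) / n.+1%:R.
  by apply: (mulIf h4); rewrite divfK // -H mulr_natr.
rewrite Ha factS natrM.
have [b ->] : exists b : rat, (Gs m r n k.+1)`_n = b by eexists.
have [c ->] : exists c : rat, (Gs m r n k)`_n = c by eexists.
rewrite exprS.
have hmk : m%:R ^+ k != 0 :> rat by rewrite expf_neq0.
move: hmk; have [p ->] : exists p : rat, m%:R ^+ k = p by eexists.
move=> hp.
field. by rewrite h1 hp !nat1r h3 hm h4.
Qed.

Lemma whit2S0 m r n : m != 0%N ->
  whit2 m r n.+1 0 = r%:R * whit2 m r n 0.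
Proof.
move=> Hm.
have H := G_deriv0 m r n n (leqnn n).
rewrite coef_deriv coefCM in H.
rewrite whit2_GS !whit2_G factS natrM.
have h2 := fact_neq0 n.
have h4 : (n.+1)%:R != 0 :> rat by rewrite pnatr_eq0.
have Ha : (Gs m r n 0)`_n.+1 = (r%:R * (Gs m r n 0)`_n) / n.+1%:R.
  by apply: (mulIf h4); rewrite divfK // -H mulr_natr.
rewrite Ha !expr0 fact0 mulr1 !divr1. field. by rewrite nat1r h4.
Qed.

Lemma exp_ser0 c : exp_ser c 0 = 1.
Proof. by rewrite /exp_ser big_ord1 /= expr0 fact0 divr1 scale1r expr0. Qed.

Lemma whit2_0 m r k : whit2 m r 0 k = (k == 0%N)%:R.
Proof.
rewrite /whit2 !exp_ser0 subrr mul1r fact0 mul1r.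
case: k => [|k]; first by rewrite expr0 coef1 expr0 fact0 mulr1 eqxx.
by rewrite exprS mul0r coef0 mul0r.
Qed.

Definition aa (m r : nat) : rat := - (r%:R / m%:R).
Definition Fs (m r n k : nat) : {poly rat} :=
  pow1p_ser m (aa m r) n.+1 * ln1p_ser m n.+1 ^+ k.

Lemma F_derivS m r n k : eqN n (uu m * (Fs m r n k.+1)^`())
  ((aa m r * m%:R)%:P * Fs m r n k.+1 + (k.+1)%:R * (m%:R)%:P * Fs m r n k).
Proof.
rewrite /Fs derivM deriv_exp /=.
apply: eqN_trans (_ : eqN n _ ((uu m * (pow1p_ser m (aa m r) n.+1)^`()) * ln1p_ser m n.+1 ^+ k.+1 +
   (pow1p_ser m (aa m r) n.+1 * ln1p_ser m n.+1 ^+ k * (uu m * (ln1p_ser m n.+1)^`())) *+ k.+1)) _.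
  apply: eqN_eq; ring.
apply: eqN_trans.
  apply: eqN_add; first by apply: eqN_mul; [apply: eqA | apply: eqN_refl].
  by apply: eqN_muln; apply: eqN_mul; [apply: eqN_refl|apply: eqB].
apply: eqN_eq.
move: (pow1p_ser m (aa m r) n.+1) => P. move: (ln1p_ser m n.+1) => L.
rewrite exprS. ring.
Qed.

Lemma F_deriv0 m r n : eqN n (uu m * (Fs m r n 0)^`()) ((aa m r * m%:R)%:P * Fs m r n 0).
Proof. rewrite /Fs !expr0 !mulr1; exact: eqA. Qed.

Lemma whit1_F m r n k : whit1 m r n k = n`!%:R * ((Fs m r n k)`_n / (m%:R ^+ k * k`!%:R)).
Proof.
rewrite /whit1 /Fs; congr (_ * (_ / _)).
apply: (fun H1 H2 => @eqN_mul n _ _ _ _ H1 H2 n (leqnn n));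
  [apply: eqN_pow1p| apply: eqN_exp; apply: eqN_ln1p].
Qed.

Lemma whit1_FS m r n k : whit1 m r n.+1 k = n.+1`!%:R * ((Fs m r n k)`_n.+1 / (m%:R ^+ k * k`!%:R)).
Proof. by []. Qed.

Lemma whit1S m r n k : m != 0%N ->
  whit1 m r n.+1 k.+1 = whit1 m r n k - (r%:R + m%:R * n%:R) * whit1 m r n k.+1.
Proof.
move=> Hm.
have H := F_derivS m r n k n (leqnn n).
rewrite coef_uD !coefD -!mulrA !mulr_natl !coefMn !coefCM in H.
rewrite whit1_FS !whit1_F factS natrM.
have hm : m%:R != 0 :> rat by rewrite pnatr_eq0.
have h1 := fact_neq0 k. have h2 := fact_neq0 n.
have h3 : (k.+1)%:R != 0 :> rat by rewrite pnatr_eq0.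
have h4 : (n.+1)%:R != 0 :> rat by rewrite pnatr_eq0.
have Ha : (Fs m r n k.+1)`_n.+1 = (aa m r * m%:R * (Fs m r n k.+1)`_n + m%:R * (Fs m r n k)`_n *+ k.+1
    - m%:R * ((Fs m r n k.+1)`_n *+ n)) / n.+1%:R.
  by apply: (mulIf h4); rewrite divfK // -H mulr_natr mulr_natl addrK.
rewrite Ha /aa exprS.
have hmk : m%:R ^+ k != 0 :> rat by rewrite expf_neq0.
move: hmk; have [p ->] : exists p : rat, m%:R ^+ k = p by eexists.
move=> hp.
rewrite factS natrM. field. by rewrite h1 hp !nat1r h3 hm h4.
Qed.

Lemma whit1S0 m r n : m != 0%N ->
  whit1 m r n.+1 0 = - (r%:R + m%:R * n%:R) * whit1 m r n 0.
Proof.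
move=> Hm.
have H := F_deriv0 m r n n (leqnn n).
rewrite coef_uD coefCM in H.
rewrite whit1_FS !whit1_F factS natrM.
have hm : m%:R != 0 :> rat by rewrite pnatr_eq0.
have h2 := fact_neq0 n.
have h4 : (n.+1)%:R != 0 :> rat by rewrite pnatr_eq0.
have Ha : (Fs m r n 0)`_n.+1 = (aa m r * m%:R * (Fs m r n 0)`_n
    - m%:R * ((Fs m r n 0)`_n *+ n)) / n.+1%:R.
  by apply: (mulIf h4); rewrite divfK // -H mulr_natr addrK.
rewrite Ha /aa !expr0 fact0 mulr1 !divr1. field. by rewrite nat1r h4 hm.
Qed.

Lemma whit1_0 m r k : whit1 m r 0 k = (k == 0%N)%:R.
Proof.
rewrite /whit1.
have -> : pow1p_ser m (- (r%:R / m%:R)) 0 = 1.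
  by rewrite /pow1p_ser big_ord1 /= gbin0 expr0 mulr1 scale1r expr0.
have -> : ln1p_ser m 0 = 0 by rewrite /ln1p_ser big_geq.
rewrite mul1r fact0 mul1r.
case: k => [|k]; first by rewrite expr0 coef1 expr0 fact0 mulr1 eqxx.
by rewrite exprS mul0r coef0 mul0r.
Qed.

Lemma w_gt m r n k : m != 0%N -> (n < k)%N -> whit1 m r n k = 0.
Proof.
move=> Hm; elim: n k => [|n IH] [|k] //= Hk.
  by rewrite whit1_0.
by rewrite whit1S // !IH // ?mulr0 ?subr0 // ltnW.
Qed.

Lemma w_diag m r n : m != 0%N -> whit1 m r n n = 1.
Proof.
move=> Hm; elim: n => [|n IH]; first by rewrite whit1_0.
by rewrite whit1S // IH w_gt // mulr0 subr0.
Qed.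

Lemma W_gt m r n k : m != 0%N -> (n < k)%N -> whit2 m r n k = 0.
Proof.
move=> Hm; elim: n k => [|n IH] [|k] //= Hk.
  by rewrite whit2_0.
by rewrite whit2S // !IH // ?mulr0 ?add0r // ltnW.
Qed.

Lemma W_diag m r n : m != 0%N -> whit2 m r n n = 1.
Proof.
move=> Hm; elim: n => [|n IH]; first by rewrite whit2_0.
by rewrite whit2S // IH W_gt // mulr0 add0r.
Qed.

Lemma ortho m r l : m != 0%N -> forall k B, (l < B)%N ->
  \sum_(j < B) whit2 m r l j * whit1 m r j k = (l == k)%:R.
Proof.
move=> Hm; elim: l => [|l IH] k [|B] //= HB.
  rewrite big_ord_recl big1 ?addr0; last by move=> i _; rewrite whit2_0 mul0r.
  by rewrite whit2_0 whit1_0 /= mul1r eq_sym.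
have E : \sum_(j < B.+1) whit2 m r l.+1 j * whit1 m r j k =
    \sum_(j < B.+1) whit2 m r l j * ((r%:R + m%:R * j%:R) * whit1 m r j k + whit1 m r j.+1 k).
  rewrite big_ord_recl whit2S0 //.
  under eq_bigr do rewrite whit2S // mulrDl.
  rewrite big_split /=.
  under [in RHS]eq_bigr do rewrite mulrDr.
  rewrite big_split /= big_ord_recl /= [in X in _ = _ + X]big_ord_recr /=.
  rewrite (@W_gt m r l B) // mul0r addr0 mulr0 addr0 addrA.
  congr (_ + _ + _); first by ring.
  by apply: eq_bigr => i _; rewrite /bump /= add1n; ring.
rewrite E; clear E; case: k => [|k].
  by rewrite big1 // => i _; rewrite whit1S0 // mulNr subrr mulr0.
rewrite (_ : l.+1 == k.+1 = (l == k)) // -(IH k B.+1 (ltnW HB)).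
by apply: eq_bigr => i _; rewrite whit1S // addrC subrK.
Qed.

Definition Cmat (m r n : nat) : 'M[{poly rat}]_(n.+1) :=
  \matrix_(j < n.+1, l < n.+1) (whit2 m r l j)%:P.

Lemma det_Cmat m r n : m != 0%N -> \det (Cmat m r n) = 1.
Proof.
move=> Hm; rewrite -det_tr det_trig.
  by rewrite big1 // => i _; rewrite !mxE W_diag.
by apply/is_trig_mxP => i j Hij; rewrite !mxE W_gt.
Qed.

Lemma MC_row m r n (i : 'I_n) (l : 'I_n.+1) : m != 0%N ->
  (Mmat m r n *m Cmat m r n) (lift ord0 i) l = ((l == i :> nat)%:R)%:P.
Proof.
move=> Hm; rewrite !mxE.
under eq_bigr do rewrite !mxE lift0 /= -polyCM.
by rewrite -rmorph_sum /= (eq_bigr (fun k : 'I_n.+1 => whit2 m r l k * whit1 m r k i)) ?ortho // => k _; rewrite mulrC.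
Qed.

Lemma MC_top m r n : (Mmat m r n *m Cmat m r n) ord0 ord_max = dowling m r n.
Proof.
rewrite !mxE /dowling; apply: eq_bigr => k _; rewrite !mxE /= mulrC mul_polyC.
by [].
Qed.

Lemma det_MC m r n : m != 0%N ->
  \det (Mmat m r n *m Cmat m r n) = (-1) ^+ n * dowling m r n.
Proof.
move=> Hm; rewrite (expand_det_col _ ord_max) big_ord_recl.
rewrite big1 ?addr0; last first.
  move=> i _; rewrite MC_row // (_ : (ord_max : 'I_n.+1) == i :> nat = false) ?mul0r //.
  by apply/negbTE; rewrite neq_ltn ltn_ord orbT.
rewrite MC_top /cofactor.
have -> : row' ord0 (col' ord_max (Mmat m r n *m Cmat m r n)) = 1%:M.
  apply/matrixP => i j; rewrite [LHS]mxE [LHS]mxE MC_row // mxE lift_max eq_sym.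
  by rewrite rmorph_nat.
by rewrite det1 mulr1 add0n mulrC.
Qed.

Theorem mainTheorem20 (m r n : nat) (hm : (1 <= m)%N) (hn : (1 <= n)%N) :
  dowling m r n = (-1) ^+ n * \det (Mmat m r n).
Proof.
have Hm : m != 0%N by rewrite -lt0n.
have H := det_MC m r n Hm.
rewrite det_mulmx det_Cmat // mulr1 in H.
by rewrite H mulrA -exprMn mulrNN mulr1 expr1n mul1r.
Qed.
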